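(* Let $H'=\begin{bmatrix}0\\1\\0\end{bmatrix}$, $V'=\begin{bmatrix}0&1&0\end{bmatrix}$, $\mathcal{C}'=Av_{\mathfrak{P}}(H',V')$, and for $n\ge1$ let $c'_n$ be the number of polyominoes in $\mathcal{C}'$ whose minimal bounding rectangle is an $n\times n$ square. Then $c'_n\ge\lfloor n/2\rfloor!$ for all $n\ge1$.
   Context: A polyomino is a finite union of unit cells of $\mathbb{Z}\times\mathbb{Z}$ that is connected via edge adjacency, considered up to translation, identified with the binary matrix of its minimal bounding rectangle (entry $1$ iff the corresponding unit square is a cell). A matrix is a submatrix of another if obtained by deleting rows and/or columns; $Av_{\mathfrak{P}}(\mathcal{M})$ is the set of polyominoes with no submatrix in $\mathcal{M}$. *)

(* Defs.v *)
From mathcomp Require Import all_boot all_algebra.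
Set Implicit Arguments. Unset Strict Implicit. Unset Printing Implicit Defensive.

(* A binary matrix M (m rows, n columns) with entry true iff the unit square is a cell. *)

Definition edge_adj m n (x y : 'I_m * 'I_n) : bool :=
  ((x.1 == y.1 :> nat) && ((x.2.+1 == y.2 :> nat) || (y.2.+1 == x.2 :> nat))) ||
  ((x.2 == y.2 :> nat) && ((x.1.+1 == y.1 :> nat) || (y.1.+1 == x.1 :> nat))).

Definition cell_rel m n (M : 'M[bool]_(m, n)) : rel ('I_m * 'I_n) :=
  fun x y => [&& M x.1 x.2, M y.1 y.2 & edge_adj x y].

(* M is (the bounding-rectangle matrix of) a polyomino: nonempty, every row and
   every column of the rectangle contains a cell (so the rectangle is minimal),
   and the set of cells is edge-connected. *)
Definition is_polyomino m n (M : 'M[bool]_(m, n)) : bool :=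
  [&& [exists x : 'I_m * 'I_n, M x.1 x.2],
      [forall i : 'I_m, exists j : 'I_n, M i j],
      [forall j : 'I_n, exists i : 'I_m, M i j] &
      [forall x : 'I_m * 'I_n, forall y : 'I_m * 'I_n,
          (M x.1 x.2 && M y.1 y.2) ==> connect (cell_rel M) x y]].

Definition submatrix p q m n (P : 'M[bool]_(p, q)) (M : 'M[bool]_(m, n)) : bool :=
  [exists f : {ffun 'I_p -> 'I_m}, exists g : {ffun 'I_q -> 'I_n},
    [&& [forall i1 : 'I_p, forall i2 : 'I_p, (i1 < i2) ==> (f i1 < f i2)],
        [forall j1 : 'I_q, forall j2 : 'I_q, (j1 < j2) ==> (g j1 < g j2)] &
        [forall i : 'I_p, forall j : 'I_q, M (f i) (g j) == P i j]]].

Definition Hp : 'M[bool]_(3, 1) := \matrix_(i < 3, j < 1) (i == 1 :> nat).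
Definition Vp : 'M[bool]_(1, 3) := \matrix_(i < 1, j < 3) (j == 1 :> nat).

Definition in_Cp m n (M : 'M[bool]_(m, n)) : bool :=
  [&& is_polyomino M, ~~ submatrix Hp M & ~~ submatrix Vp M].

Definition cp (n : nat) : nat := #|[pred M : 'M[bool]_(n, n) | in_Cp M]|.

(* Main.v *)
Require Import Defs.
From mathcomp Require Import all_boot all_algebra.
From mathcomp Require Import perm zify.
Set Implicit Arguments. Unset Strict Implicit.

Definition zeroP k (s : {perm 'I_k}) (r c : nat) : bool :=
  [exists i : 'I_k, (r == (i:nat).*2.+1) && (c == (s i : nat).*2.+1)].

Definition Mof n (s : {perm 'I_(n./2)}) : 'M[bool]_(n, n) :=
  \matrix_(r < n, c < n) ~~ zeroP s r c.

Lemma zero_odd k (s : {perm 'I_k}) r c : zeroP s r c -> odd r /\ odd c.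
Proof.
move/existsP=> [i /andP [/eqP -> /eqP ->]]. by rewrite /= !odd_double.
Qed.

Lemma zero_row k (s : {perm 'I_k}) r c c' : zeroP s r c -> zeroP s r c' -> c = c'.
Proof.
move/existsP=> [i /andP [/eqP -> /eqP ->]].
move/existsP=> [j /andP [/eqP H /eqP ->]].
have: i = j by apply: ord_inj; lia.
by move=> ->.
Qed.

Lemma zero_col k (s : {perm 'I_k}) r r' c : zeroP s r c -> zeroP s r' c -> r = r'.
Proof.
move/existsP=> [i /andP [/eqP -> /eqP ->]].
move/existsP=> [j /andP [/eqP -> /eqP H]].
have: s i = s j by apply: ord_inj; lia.
by move/perm_inj=> ->.
Qed.

Section Conn.
Variable n' : nat.
Local Notation N := n'.+1.
Variable M : 'M[bool]_(N, N).
Hypothesis Heven : forall r c : 'I_N, ~~ odd r -> M r c.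
Hypothesis Hcol0 : forall r : 'I_N, M r ord0.

Lemma rowwalk (r : 'I_N) : ~~ odd r -> forall c, c < N ->
  connect (cell_rel M) (r, inord c) (r, ord0).
Proof.
move=> Hr; elim=> [|c IH] Hc.
  have -> : (inord 0 : 'I_N) = ord0 by apply: val_inj; rewrite /= inordK.
  exact: connect0.
apply: connect_trans (IH (ltnW Hc)).
apply: connect1.
rewrite /cell_rel /= !Heven //= /edge_adj /= !inordK //; last exact: ltnW.
by rewrite eqxx /= eqxx orbT.
Qed.

Lemma colwalk c : c < N -> connect (cell_rel M) (inord c, ord0) (ord0, ord0).
Proof.
elim: c => [|c IH] Hc.
  have -> : (inord 0 : 'I_N) = ord0 by apply: val_inj; rewrite /= inordK.
  exact: connect0.
apply: connect_trans (IH (ltnW Hc)).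
apply: connect1.
rewrite /cell_rel /= !Hcol0 //= /edge_adj /= !inordK //; last exact: ltnW.
by rewrite eqxx !orbT.
Qed.

Lemma to_origin (x : 'I_N * 'I_N) : M x.1 x.2 -> connect (cell_rel M) x (ord0, ord0).
Proof.
have even_case : forall r c : 'I_N, ~~ odd r -> connect (cell_rel M) (r, c) (ord0, ord0).
  move=> r c Hr.
  apply: connect_trans (_ : connect _ (r, ord0) _).
    by have := rowwalk Hr (ltn_ord c); rewrite inord_val.
  by have := colwalk (ltn_ord r); rewrite inord_val.
case: x => r c /= Hx.
case Hr: (odd r); last by apply: even_case; rewrite Hr.
have Hlt : r.-1 < N by apply: leq_ltn_trans (leq_pred r) (ltn_ord r).
have Hr0 : 0 < r by case: (nat_of_ord r) Hr.
have Hev1 : ~~ odd (inord r.-1 : 'I_N) by rewrite inordK // -oddS prednK // Hr.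
apply: connect_trans (_ : connect _ (inord r.-1, c) _).
  apply: connect1.
  rewrite /cell_rel /= Hx Heven /=; last exact: Hev1.
  rewrite /edge_adj /= inordK // eqxx /=.
  by rewrite prednK // eqxx !orbT.
exact: even_case.
Qed.

End Conn.

Lemma cell_rel_sym m n (M : 'M[bool]_(m, n)) : symmetric (cell_rel M).
Proof.
move=> x y; rewrite /cell_rel /edge_adj.
rewrite [M x.1 x.2 && _]andbA [M y.1 y.2 && _]andbA [M x.1 x.2 && M y.1 y.2]andbC.
congr (_ && _).
by rewrite (eq_sym (x.1 : nat)) (eq_sym (x.2 : nat)) (orbC (x.2.+1 == _)) (orbC (x.1.+1 == _)).
Qed.

Lemma Mof_in n' (s : {perm 'I_(n'.+1./2)}) : in_Cp (Mof s).
Proof.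
have Hev : forall r c : 'I_n'.+1, ~~ odd r -> Mof s r c.
  move=> r c Hr; rewrite mxE; apply/negP=> /zero_odd [Ho _].
  by rewrite Ho in Hr.
have Hc0 : forall r : 'I_n'.+1, Mof s r ord0.
  move=> r; rewrite mxE; apply/negP=> /zero_odd [_ Ho]. by [].
apply/and3P; split.
- apply/and4P; split.
  + by apply/existsP; exists (ord0, ord0); rewrite /= Hc0.
  + by apply/forallP=> i; apply/existsP; exists ord0; rewrite Hc0.
  + by apply/forallP=> j; apply/existsP; exists ord0; rewrite Hev.
  + apply/forallP=> x; apply/forallP=> y; apply/implyP=> /andP [Hx Hy].
    apply: connect_trans (to_origin Hev Hc0 Hx) _.
    rewrite (sym_connect_sym (@cell_rel_sym _ _ (Mof s))).
    exact: (to_origin Hev Hc0 Hy).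
- apply/negP=> /existsP [f /existsP [g /and3P [Hf Hg Hv]]].
  have H0 := forallP (forallP Hv (Ordinal (isT : 0 < 3))) ord0.
  have H2 := forallP (forallP Hv (Ordinal (isT : 2 < 3))) ord0.
  rewrite !mxE in H0 H2.
  move: (negbFE (elimT eqP H0)) (negbFE (elimT eqP H2)) => {}H0 {}H2.
  have := implyP (forallP (forallP Hf (Ordinal (isT : 0 < 3))) (Ordinal (isT : 2 < 3))) isT.
  by rewrite (zero_col H0 H2) ltnn.
- apply/negP=> /existsP [f /existsP [g /and3P [Hf Hg Hv]]].
  have H0 := forallP (forallP Hv ord0) (Ordinal (isT : 0 < 3)).
  have H2 := forallP (forallP Hv ord0) (Ordinal (isT : 2 < 3)).
  rewrite !mxE in H0 H2.
  move: (negbFE (elimT eqP H0)) (negbFE (elimT eqP H2)) => {}H0 {}H2.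
  have := implyP (forallP (forallP Hg (Ordinal (isT : 0 < 3))) (Ordinal (isT : 2 < 3))) isT.
  by rewrite (zero_row H0 H2) ltnn.
Qed.

Lemma Mof_inj n : injective (@Mof n).
Proof.
move=> s t Est; apply/permP=> i.
have Hi : (i : nat).*2.+1 < n by have := ltn_ord i; lia.
have Hsi : (s i : nat).*2.+1 < n by have := ltn_ord (s i); lia.
have : zeroP s (Ordinal Hi) (Ordinal Hsi).
  by apply/existsP; exists i; rewrite /= !eqxx.
have := congr1 (fun M : 'M[bool]_(n, n) => M (Ordinal Hi) (Ordinal Hsi)) Est.
rewrite /= !mxE => E Z.
have : zeroP t (Ordinal Hi) (Ordinal Hsi) by move: E; rewrite Z /=; case: zeroP.
move/existsP=> [j /andP [/eqP /= H1 /eqP /= H2]].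
have ij : i = j by apply: ord_inj; lia.
subst j; apply: ord_inj; lia.
Qed.

Theorem proposition19 (n : nat) : 0 < n -> (n./2)`! <= cp n.
Proof.
case: n => [//|n'] _.
rewrite /cp.
have := card_perm [set: 'I_(n'.+1./2)]; rewrite cardsT card_ord => <-.
rewrite -(card_imset (perm_on [set: 'I_(n'.+1./2)]) (@Mof_inj n'.+1)).
apply: subset_leq_card; apply/subsetP=> M /imsetP [s _ ->].
by rewrite inE Mof_in.
Qed.
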